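(* Let $H$ be a digraph with at least two vertices and $r\in V(H)$ such that every vertex of $H$ is reachable from $r$, and let $B_r$ be the diblock of $r$ in $H$. Then for every pair of distinct vertices $x,y\in B_r$ there exist a directed $r$–$x$ path $P_x$ and a directed $r$–$y$ path $P_y$ such that $V(P_x)\cap V(P_y)=\{r\}$.
   Context: Digraphs are finite and without loops; paths are directed. A vertex $v$ is bi-reachable from $r$ if there are two internally vertex-disjoint directed paths from $r$ to $v$. For a digraph $H$ with at least two vertices and $r\in V(H)$ such that every vertex of $H$ is reachable from $r$, the diblock $B_r$ of $r$ in $H$ is the set of all vertices bi-reachable from $r$, together with $r$ and all out-neighbours of $r$. *)

(* Defs.v *)
(* A digraph H is a finite type T (the vertex set) with an
   edge relation e : rel T; loops are excluded by the hypothesis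
   [irreflexive e] in the theorem. *)
From mathcomp Require Import all_boot.
Set Implicit Arguments. Unset Strict Implicit. Unset Printing Implicit Defensive.

Section Digraph.
Variable T : finType.
Variable e : rel T.

(* [dipath u v p]: the vertex sequence u :: p is a directed path from u to v
   (consecutive vertices joined by arcs, last vertex v, no repeated vertex).
   Its vertex set is u :: p. *)
Definition dipath (u v : T) (p : seq T) : Prop :=
  [/\ path e u p, last u p = v & uniq (u :: p)].

Definition reachable (r v : T) : Prop := exists p, dipath r v p.

(* v is bi-reachable from r: two internally vertex-disjoint directed r-v paths.
   The vertices of r :: p other than r and v are exactly those of p other than v
   (r does not occur in p by uniqueness). *)
Definition bireachable (r v : T) : Prop :=
  exists p1 p2, [/\ dipath r v p1, dipath r v p2 &
    forall z, z \in p1 -> z \in p2 -> z = v].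

Definition in_diblock (r v : T) : Prop :=
  v = r \/ e r v \/ bireachable r v.
End Digraph.

(* Main.v *)
Require Import Defs.
From mathcomp Require Import all_boot.

Set Implicit Arguments.
Section Aux.
Variable T : finType.
Variable e : rel T.

Lemma split_last (P : pred T) (s : seq T) : has P s ->
  exists A w B, [/\ s = A ++ w :: B, P w & ~~ has P B].
Proof.
elim/last_ind: s => [|s z IH] //.
rewrite has_rcons; case Pz: (P z) => /= H.
  by exists s, z, [::]; rewrite cats1.
have [A [w [B [-> Pw nB]]]] := IH H.
exists A, w, (rcons B z); split => //.
  by rewrite -cats1 -catA cat_cons cats1.
by rewrite has_rcons Pz.
Qed.

Lemma path_suffix a t A w B : a :: t = A ++ w :: B -> path e a t -> path e w B.
Proof.
case: A => [|c A] /= [-> ->] // ; rewrite cat_path /= => /and3P[_ _ ->] //.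
Qed.

Lemma core r x y p q1 q2 A w B :
  dipath e r x p -> dipath e r y q1 -> dipath e r y q2 ->
  (forall z, z \in r :: q1 -> z \in r :: q2 -> z = r \/ z = y) ->
  r :: p = A ++ w :: B -> w \in r :: q1 -> w <> y ->
  (forall z, z \in B -> z \notin r :: q1) ->
  (forall z, z \in B -> z \notin r :: q2) ->
  exists n, dipath e r x n /\ forall z, z \in r :: n -> z \in r :: q2 -> z = r.
Proof.
move=> [pp lp up] [pq1 lq1 uq1] _ Hq Ep wq1 wy nB1 nB2.
have pB : path e w B by apply: path_suffix Ep pp.
have uB : uniq (w :: B) by move: up; rewrite Ep cat_uniq => /and3P[].
have lB : last w B = x by rewrite -lp -[last r p]/(last r (r :: p)) Ep last_cat.
have [C [D EQ]] : exists C D, r :: q1 = C ++ w :: D.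
  by case/splitPr: wq1 => C D; exists C, D.
have [n [En pn]] : exists n, r :: n = C ++ w :: B /\ path e r n.
  move: EQ pq1; case: C => [|c C] /=.
    by move=> [-> _] _; exists B.
  move=> [<- ->]; rewrite cat_path /= => /and3P[h1 h2 _].
  by exists (C ++ w :: B); rewrite cat_path /= h1 h2 pB.
rewrite EQ in Hq uq1.
have lq1' : last r (r :: q1) = y by [].
rewrite EQ in lq1'.
exists n; split; last first.
  move=> z; rewrite En mem_cat inE => /orP[zC|/orP[/eqP->|zB]] zq2.
  - have zq1 : z \in C ++ w :: D by rewrite mem_cat zC.
    case: (Hq z zq1 zq2) => [->//|zy]; exfalso.
    move: uq1; rewrite cat_uniq => /and3P[_ hD _]; move/hasP: hD; apply.
    exists z => //; rewrite zy -lq1' last_cat /=; exact: mem_last.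
  - have wq : w \in C ++ w :: D by rewrite mem_cat inE eqxx orbT.
    by case: (Hq w wq zq2) => // /wy.
  - by move: (nB2 z zB); rewrite zq2.
split => //.
  by rewrite -[last r n]/(last r (r :: n)) En last_cat.
rewrite En cat_uniq uB andbT.
move: uq1; rewrite cat_uniq => /and3P[-> hD _] /=.
apply/negP => /orP[wC|/hasP[z zB zC]].
  by move/hasP: hD; apply; exists w; rewrite ?inE ?eqxx.
by move: (nB1 z zB); rewrite EQ mem_cat zC.
Qed.

Definition wbi r v := exists p1 p2, [/\ dipath e r v p1, dipath e r v p2 &
  forall z, z \in r :: p1 -> z \in r :: p2 -> z = r \/ z = v].

Lemma attempt r x y p q1 q2 :
  dipath e r x p -> dipath e r y q1 -> dipath e r y q2 ->
  (forall z, z \in r :: q1 -> z \in r :: q2 -> z = r \/ z = y) ->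
  y \in r :: p \/
  exists n m, [/\ dipath e r x n, dipath e r y m &
     forall z, z \in r :: n -> z \in r :: m -> z = r].
Proof.
move=> Hp Hq1 Hq2 Hq.
have : has (fun z => (z \in r :: q1) || (z \in r :: q2)) (r :: p).
  by rewrite /= !inE eqxx.
case/split_last => A [w [B [Ep Sw nB]]].
have nB1 : forall z, z \in B -> z \notin r :: q1.
  by move=> z zB; apply: contra nB => zq; apply/hasP; exists z; rewrite ?zq.
have nB2 : forall z, z \in B -> z \notin r :: q2.
  by move=> z zB; apply: contra nB => zq; apply/hasP; exists z; rewrite ?zq ?orbT.
case: (eqVneq w y) => [wy|/eqP wy].
  by left; rewrite Ep mem_cat inE wy eqxx orbT.
right; case/orP: Sw => Sw.
  have [n [Hn Hd]] := @core r x y _ _ _ A w B Hp Hq1 Hq2 Hq Ep Sw wy nB1 nB2.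
  by exists n, q2.
have Hq' : forall z, z \in r :: q2 -> z \in r :: q1 -> z = r \/ z = y.
  by move=> z a b; apply: Hq.
have [n [Hn Hd]] := @core r x y _ _ _ A w B Hp Hq2 Hq1 Hq' Ep Sw wy nB2 nB1.
by exists n, q1.
Qed.

End Aux.

Theorem lemma5 (T : finType) (e : rel T) (r : T) :
  irreflexive e -> 1 < #|T| ->
  (forall v : T, reachable e r v) ->
  forall x y : T, in_diblock e r x -> in_diblock e r y -> x <> y ->
  exists px py : seq T,
    [/\ dipath e r x px, dipath e r y py &
        forall z, z \in r :: px -> z \in r :: py -> z = r].
Proof.
move=> irr _ reach x y Dx Dy xy.
have d0 : dipath e r r [::] by split.
case: (eqVneq x r) => [->|/eqP xr].
  have [q Hq] := reach y; exists [::], q; split => // z; rewrite inE => /eqP.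
  done.
case: (eqVneq y r) => [->|/eqP yr].
  have [p Hp] := reach x; exists p, [::]; split => // z _; rewrite inE => /eqP.
  done.
have W : forall v, v <> r -> in_diblock e r v -> @wbi T e r v.
  move=> v vr [//|[ev|[p1 [p2 [H1 H2 H]]]]].
    have dv : dipath e r v [:: v].
      split; rewrite /= ?ev ?andbT ?inE //.
      by apply/eqP => rv; move: ev; rewrite rv irr.
    exists [:: v], [:: v]; split => // z; rewrite !inE => /orP[/eqP->|/eqP->] _;
      by [left|right].
  exists p1, p2; split => // z; rewrite !inE => /orP[/eqP->|z1]; first by left.
  case/orP => [/eqP->|z2]; first by left.
  by right; apply: H.
have [p1 [p2 [Hp1 Hp2 Hp]]] := W x xr Dx.
have [q1 [q2 [Hq1 Hq2 Hq]]] := W y yr Dy.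
case: (attempt Hp1 Hq1 Hq2 Hq) => [y1|[n [m [? ? ?]]]]; last by exists n, m.
case: (attempt Hp2 Hq1 Hq2 Hq) => [y2|[n [m [? ? ?]]]]; last by exists n, m.
by case: (Hp y y1 y2) => E; exfalso; [exact: yr | exact: xy (esym E)].
Qed.
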